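(* Let $n\ge3$ be an even integer and let $x\in\mathcal{D}_n$ have order $m$. Then the degree of $x$ in $OD(\mathcal{D}_n)$ is $$\deg(x)=\begin{cases} m-2\phi(m)+\sum_{\lambda\mid\frac{n}{m}}\phi(\lambda m), & m \text{ odd},\ m>1,\\ \sum_{\lambda\mid\frac{n}{2}}\phi(2\lambda), & m=2,\\ n+m-2\phi(m)+\sum_{\lambda\mid\frac{n}{m}}\phi(\lambda m), & m\text{ even},\ m>2,\\ 2n-1, & m=1,\end{cases}$$ where $\phi$ is Euler's totient function.
   Context: The dihedral group $\mathcal{D}_n$ ($n\ge3$) is the group $\langle a,b\mid a^n=b^2=(ab)^2=e\rangle$ of order $2n$. For a finite group $G$, $o(x)$ denotes the order of $x\in G$. The order-divisor graph $OD(G)$ is the simple undirected graph with vertex set $G$, in which two distinct vertices $x,y$ are adjacent if and only if $o(x)\neq o(y)$ and either $o(x)\mid o(y)$ or $o(y)\mid o(x)$. *)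

(* Defs.v *)
From mathcomp Require Import all_boot all_order all_algebra all_fingroup all_solvable.
Set Implicit Arguments. Unset Strict Implicit. Unset Printing Implicit Defensive.

Definition od_adj (gT : finGroupType) (x y : gT) : bool :=
  [&& x != y, #[x]%g != #[y]%g & (#[x]%g %| #[y]%g) || (#[y]%g %| #[x]%g)].

Definition od_deg (gT : finGroupType) (G : {set gT}) (x : gT) : nat :=
  #|[set y in G | od_adj x y]|.

(* Main.v *)
Require Import Defs.
From mathcomp Require Import all_boot all_order all_algebra all_fingroup all_solvable.
From mathcomp Require Import zify.
Set Implicit Arguments. Unset Strict Implicit. Unset Printing Implicit Defensive.
Open Scope group_scope.

Lemma dih_struct n : 1 < n -> exists r : 'D_(n.*2), #[r] = n /\
  forall g : 'D_(n.*2), g \notin <[r]> -> #[g] = 2%N.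
Proof.
move=> n_gt1.
have := isog_refl ('D_(n.*2)).
case/(isoGrpP _ (Grp_dihedral n_gt1)) => oG.
case/existsP=> -[x y] /= /eqP[defG xq y2 xy].
have{} defG: <[x]> * <[y]> = 'D_(n.*2).
  by rewrite -norm_joinEr // norms_cycle xy groupV cycle_id.
have ltqm : n < n.*2 by rewrite -addnn -{1}(addn0 n) ltn_add2l ltnW.
have notXy: y \notin <[x]>.
  apply: contraL ltqm => Xy; rewrite -leqNgt -{1}(card_dihedral n_gt1) -defG mulGSid ?cycle_subG //.
  by rewrite dvdn_leq ?(ltnW n_gt1) // order_dvdn xq.
have oy: #[y] = 2%N by apply: nt_prime_order (group1_contra notXy).
have ox: #[x] = n.
  apply: double_inj; transitivity #|'D_(n.*2)|; last exact: card_dihedral.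
  rewrite -defG TI_cardMg -?orderE ?oy ?muln2 //.
  by rewrite setIC prime_TIg ?cycle_subG // -orderE oy.
exists x; split => // g notXg.
have : g \in <[x]> * <[y]> by rewrite defG inE.
case/mulsgP=> a b Xa Yb defg.
have b1 : b != 1 by apply: contraNneq notXg => b1; rewrite defg b1 mulg1.
have by_ : b = y.
  by move: Yb; rewrite cycle2g // !inE (negPf b1) => /eqP.
apply: nt_prime_order => //.
  rewrite defg by_; case/cycleP: Xa => i ->; rewrite expgS expg1.
  have yV : y^-1 = y by rewrite -[y^-1]mul1g -y2 expgS expg1 mulgK.
  have: (x ^+ i) ^ y = (x ^+ i)^-1 by rewrite conjXg xy expgVn.
  rewrite /conjg yV => h.
  by rewrite -mulgA h mulgV.
by apply: contraNneq notXg => ->; rewrite group1.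
Qed.
Section Cyc.
Variables (gT : finGroupType) (r : gT) (n : nat).
Hypothesis orn : #[r] = n.

Lemma ordX d : d %| n -> #[r ^+ (n %/ d)] = d.
Proof.
move=> dn; have n_gt0 : (0 < n)%N by rewrite -orn order_gt0.
have d_gt0 : (0 < d)%N by rewrite (dvdn_gt0 n_gt0).
rewrite orderXdiv orn ?dvdn_div //.
by rewrite -{1}(divnK dn) mulKn // divn_gt0 // dvdn_leq.
Qed.

Lemma card_div d : d %| n -> #|[set y in <[r]> | #[y] %| d]| = d.
Proof.
move=> dn; rewrite -[X in _ = X](ordX dn) orderE; congr #|pred_of_set _|.
apply/setP=> y; rewrite !inE; apply/andP/idP.
  case=> Xy; rewrite -{1}(ordX dn) !orderE.
  rewrite (cardSg_cyclic (cycle_cyclic r)) ?cycle_subG ?groupX ?cycle_id //.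

move=> Ay; split.
  by apply: (subsetP (cycleX r (n %/ d))).
by rewrite -(ordX dn) order_dvdG.
Qed.

Lemma card_eq d : d %| n -> #|[set y in <[r]> | #[y] == d]| = totient d.
Proof.
move=> dn; rewrite -[X in _ = totient X](ordX dn) totient_gen; congr #|pred_of_set _|.
apply/setP=> y; rewrite !inE /generator; apply/andP/idP.
  case=> Xy /eqP oy; rewrite (eq_subG_cyclic (cycle_cyclic r)) ?cycleX //.
    by rewrite -!orderE oy ordX.
  by rewrite cycle_subG.
move=> gy; split.
  exact: (subsetP (cycleX r (n %/ d))) _ (cycle_generator gy).
by rewrite -(generator_order gy) ordX.
Qed.

Lemma card_mul m : m %| n ->
  #|[set y in <[r]> | m %| #[y]]| = (\sum_(l <- divisors (n %/ m)) totient (l * m))%N.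
Proof.
move=> mn; have n_gt0 : (0 < n)%N by rewrite -orn order_gt0.
have m_gt0 : (0 < m)%N by rewrite (dvdn_gt0 n_gt0).
have nm_gt0 : (0 < n %/ m)%N by rewrite divn_gt0 // dvdn_leq.
transitivity (\sum_(l <- divisors (n %/ m)) #|[set y in <[r]> | #[y] == l * m]|)%N; last first.
  apply: eq_big_seq => l; rewrite -dvdn_divisors // => ldv.
  by rewrite card_eq // -(divnK mn) dvdn_pmul2r.
rewrite -sum1_card big_mkcond /=.
rewrite [RHS](eq_bigr (fun l => \sum_(y in [set y in <[r]> | #[y] == l * m]) 1)%N); last by move=> l _; rewrite sum1_card.
under [RHS]eq_bigr => l _ do rewrite big_mkcond /=.

rewrite exchange_big /=; apply: eq_bigr => y _.
rewrite -big_mkcond /= sum1_count !inE.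
case Xy: (y \in <[r]>) => /=; last first.

  by rewrite (eq_count (a2 := xpred0)) ?count_pred0 // => l; rewrite inE Xy.
have yn : #[y] %| n by rewrite -orn orderE cardSg // cycle_subG.
case: (boolP (m %| #[y])) => my.
  rewrite (eq_count (a2 := xpred1 (#[y] %/ m))); last first.
    move=> l; rewrite !inE Xy /=; apply/eqP/eqP => [->|->]; first by rewrite mulnK.
    by rewrite divnK.
  rewrite count_uniq_mem ?divisors_uniq // -dvdn_divisors //.
  have [k hk] := dvdnP my; have [j hj] := dvdnP mn.
  move: yn; rewrite hk {1}hj dvdn_pmul2r // => yn.
  by rewrite hj !mulnK // yn.
rewrite (eq_count (a2 := xpred0)) ?count_pred0 // => l; rewrite inE Xy /=.
by apply: contraNF my => /eqP ->; rewrite dvdn_mull.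
Qed.
End Cyc.

Theorem mainTheorem18 (n : nat) (x : 'D_(n.*2)) :
  3 <= n -> ~~ odd n ->
  let m := #[x]%g in
  let S := (\sum_(l <- divisors (n %/ m)) totient (l * m))%N in
  Posz (od_deg [set: 'D_(n.*2)] x) =
    (if m == 1%N then Posz (2 * n - 1)
     else if m == 2%N then Posz (\sum_(l <- divisors (n %/ 2)) totient (2 * l))
     else if odd m then Posz m - 2 * Posz (totient m) + Posz S
     else Posz n + Posz m - 2 * Posz (totient m) + Posz S)%R.
Proof.
move=> n3 evn m S.
have SE : S = (\sum_(l <- divisors (n %/ m)) totient (l * m))%N by [].
have mE : m = #[x] by [].
clearbody S m.
have n_gt1 : (1 < n)%N by apply: leq_trans n3.
have [r [orn invol]] := dih_struct n_gt1.
set X := <[r]>.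
have cardX : #|X| = n := etrans (esym (orderE r)) orn.
have cardnX : #|~: X| = n.
  have := cardsC X; rewrite cardX -cardsT card_dihedral //.
  lia.
have mn : (m %| n)%N.
  case Xx: (x \in X); first by rewrite mE (dvdn_trans (order_dvdG Xx)) ?cardX.
  by rewrite mE invol ?Xx // dvdn2.
pose cond (d : nat) := (d != m) && ((m %| d) || (d %| m)).
have adjE y : od_adj x y = cond #[y].
  rewrite /od_adj /cond -mE eq_sym.
  case: (eqVneq y x) => [->|_] /=; first by rewrite -mE !eqxx.
  by rewrite eq_sym.
pose P1 := [set y in X | cond #[y]].
pose D1 := [set y in X | #[y] %| m].
pose B := [set y in X | m %| #[y]].
pose C := [set y in X | #[y] == m].
have cD1 : #|D1| = m by rewrite (card_div orn).
have cB : #|B| = S by rewrite SE (card_mul orn).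
have cC : #|C| = totient m by rewrite (card_eq orn).
have h2 : (#|P1| + 2 * #|C| = #|D1| + #|B|)%N.
  have e1 : D1 :&: B = C.
    by apply/setP=> y; rewrite !inE eqn_dvd; case: (y \in X); case: (_ %| _); case: (_ %| _).
  have e2 : (D1 :|: B) :\: C = P1.
    apply/setP=> y; rewrite !inE /cond eqn_dvd.
    by case: (y \in X); case: (_ %| _); case: (_ %| _).
  have e3 : (D1 :|: B) :&: C = C.
    apply/setP=> y; rewrite !inE eqn_dvd.
    by case: (y \in X); case: (_ %| _); case: (_ %| _).
  have := cardsUI D1 B; have := cardsID C (D1 :|: B).
  rewrite e1 e2 e3; lia.
have q1 : #|[set y in [set: 'D_(n.*2)] | od_adj x y] :&: X| = #|P1|.
  by apply: eq_card => y; rewrite !inE adjE andbC.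
have q2 : #|[set y in [set: 'D_(n.*2)] | od_adj x y] :\: X| = (if cond 2 then n else 0).
  case: ifP => c2.
    transitivity #|~: X|; last exact: cardnX.
    apply: eq_card => y; rewrite !inE adjE.
    by case Xy: (y \in X) => //=; rewrite invol ?Xy.
  apply: eq_card0 => y; rewrite !inE adjE.
  by case Xy: (y \in X) => //=; rewrite invol ?Xy.
have h1 : od_deg [set: 'D_(n.*2)] x = (#|P1| + (if cond 2 then n else 0))%N.
  by rewrite /od_deg -q1 -q2 cardsID.
rewrite h1.
have m_gt0 : (0 < m)%N by rewrite mE order_gt0.
rewrite cD1 cB cC in h2.
have [m1|m_ne1] := eqVneq m 1%N.
  have cB' : #|B| = n.
    transitivity #|X|; last exact: cardX.
    by apply: eq_card => y; rewrite !inE m1 dvd1n andbT.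
  rewrite cB in cB'.
  have c2 : cond 2 by rewrite /cond m1.
  rewrite c2 /=; rewrite m1 in h2; move: h2; rewrite cB' /=.
  have t1 : totient 1 = 1%N by [].
  move=> h2; congr Posz; lia.
have [m2|m_ne2] := eqVneq m 2%N.
  have c2 : cond 2 = false by rewrite /cond m2.
  have t2 : totient 2 = 1%N by [].
  rewrite c2 /=; move: h2; rewrite SE m2 /= => h2; congr Posz.
  rewrite (eq_bigr (fun l => totient (l * 2))); first by lia.
  by move=> l _; rewrite mulnC.
have mnot2 : ~~ (m %| 2).
  apply/negP => /(dvdn_leq (isT : (0 < 2)%N)); move: m_ne1 m_ne2 m_gt0; lia.
case om: (odd m).
  have c2 : cond 2 = false.
    by rewrite /cond dvdn2 om (negPf mnot2) /= andbF.
  rewrite c2 addn0; lia.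
have c2 : cond 2 by rewrite /cond dvdn2 om eq_sym m_ne2 orbT.
rewrite c2; lia.
Qed.
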